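(* Let $S$ be a semigroup such that $E(S)$ is a semilattice. Then the $\mathcal{L}^*$-classes of idempotents form a meet semilattice under the partial order on $S/\mathcal{L}^*$ induced by $\leq_{\mathcal{L}^*}$, and for all $e,f\in E(S)$ we have $L^*_e\wedge L^*_f=L^*_{ef}$.
   Context: On $S$, $a\leq_{\mathcal{L}^*}b$ iff for all $x,y\in S^1$, $bx=by$ implies $ax=ay$; $\mathcal{L}^*$ is the associated equivalence ($a\,\mathcal{L}^*\,b$ iff for all $x,y\in S^1$, $ax=ay\Leftrightarrow bx=by$), and $L^*_a$ denotes the $\mathcal{L}^*$-class of $a$. $E(S)$ is the set of idempotents; it is a semilattice when idempotents commute. *)

(* Defs.v *)
(* Plain Rocq: a semigroup is a carrier type S with an associative
   binary operation [mul].  S^1 = S with an adjoined identity is modelled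
   as [option S], [None] being the adjoined identity 1. *)

Definition mul1 {S : Type} (mul : S -> S -> S) (a : S) (x : option S) : S :=
  match x with
  | None => a
  | Some y => mul a y
  end.

Definition leLstar {S : Type} (mul : S -> S -> S) (a b : S) : Prop :=
  forall x y : option S, mul1 mul b x = mul1 mul b y -> mul1 mul a x = mul1 mul a y.

Definition Lstar {S : Type} (mul : S -> S -> S) (a b : S) : Prop :=
  forall x y : option S, mul1 mul a x = mul1 mul a y <-> mul1 mul b x = mul1 mul b y.

Definition idempotent {S : Type} (mul : S -> S -> S) (e : S) : Prop :=
  mul e e = e.

Definition associative_op {S : Type} (mul : S -> S -> S) : Prop :=
  forall a b c : S, mul a (mul b c) = mul (mul a b) c.

(* E(S) is a semilattice: idempotents commute. *)
Definition idempotents_commute {S : Type} (mul : S -> S -> S) : Prop :=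
  forall e f : S, idempotent mul e -> idempotent mul f -> mul e f = mul f e.

(* Main.v *)
Require Import Defs.

Lemma mul1_assoc {S : Type} (mul : S -> S -> S) (Hassoc : associative_op mul) a b x :
  mul1 mul (mul a b) x = mul a (mul1 mul b x).
Proof. destruct x; simpl; [symmetry; apply Hassoc | reflexivity]. Qed.

Lemma le_idem {S : Type} (mul : S -> S -> S) g e :
  idempotent mul e -> leLstar mul g e -> mul g e = g.
Proof.
  intros He H. apply (H (Some e) None). simpl. exact He.
Qed.

Theorem lemma4p3 (S : Type) (mul : S -> S -> S)
    (Hassoc : associative_op mul) (HE : idempotents_commute mul) :
  (forall a, leLstar mul a a) /\
  (forall a b c, leLstar mul a b -> leLstar mul b c -> leLstar mul a c) /\
  (forall a b, Lstar mul a b <-> (leLstar mul a b /\ leLstar mul b a)) /\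
  (forall e f : S, idempotent mul e -> idempotent mul f ->
     idempotent mul (mul e f) /\
     leLstar mul (mul e f) e /\ leLstar mul (mul e f) f /\
     (forall g : S, idempotent mul g ->
        leLstar mul g e -> leLstar mul g f -> leLstar mul g (mul e f))).
Proof.
  split; [|split; [|split]].
  - intros a x y H; exact H.
  - intros a b c H1 H2 x y H. apply H1, H2, H.
  - intros a b; unfold Lstar, leLstar; split.
    + intros H; split; intros x y; apply H.
    + intros [H1 H2] x y; split; [apply H2|apply H1].
  - intros e f He Hf.
    assert (Hc : mul e f = mul f e) by (apply HE; assumption).
    split; [|split; [|split]].
    + unfold idempotent.
      rewrite <- Hassoc. rewrite (Hassoc f e f). rewrite <- Hc.
      rewrite <- Hassoc. rewrite Hf. rewrite Hassoc. rewrite He. reflexivity.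
    + intros x y H. rewrite Hc, !(mul1_assoc mul Hassoc), H. reflexivity.
    + intros x y H. rewrite !(mul1_assoc mul Hassoc), H. reflexivity.
    + intros g Hg Hge Hgf x y H.
      assert (Hgef : mul g (mul e f) = g).
      { rewrite Hassoc, (le_idem mul g e He Hge), (le_idem mul g f Hf Hgf). reflexivity. }
      rewrite <- Hgef, !(mul1_assoc mul Hassoc g (mul e f)), H. reflexivity.
Qed.
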